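(* For relatively prime integers $r, s$ put $u = r^2 + s^2$, $v = 2r^2 - s^2$, and $\mathcal{S} = \{\pm u(u+v),\ \pm u(u-v),\ \pm v(u+v),\ \pm v(u-v)\}$. Then for all but finitely many pairs $(r,s)$ of relatively prime integers with $r \neq 0$, no element of $\mathcal{S}$ represents the same class in $\mathbb{Q}^\times/(\mathbb{Q}^\times)^2$ as any of $uv, -uv, u^2-v^2, -(u^2-v^2)$.
   Context: $\mathbb{Q}^\times/(\mathbb{Q}^\times)^2$ denotes the group of nonzero rationals modulo nonzero squares; two nonzero rationals represent the same class iff their quotient is a square of a rational. *)

(* Defs.v *)
From HB Require Import structures.
From mathcomp Require Import all_boot all_order all_algebra.
Set Implicit Arguments. Unset Strict Implicit. Unset Printing Implicit Defensive.
Import Order.TTheory GRing.Theory Num.Theory.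
Local Open Scope ring_scope.

(* Two nonzero rationals represent the same class in Q^x/(Q^x)^2
   iff their quotient is the square of a rational. *)
Definition same_sqclass (a b : rat) : Prop :=
  a != 0 /\ b != 0 /\ exists q : rat, a / b = q ^+ 2.

Definition uval (r s : int) : int := r ^+ 2 + s ^+ 2.
Definition vval (r s : int) : int := 2 * r ^+ 2 - s ^+ 2.

Definition Sset (r s : int) : seq int :=
  let u := uval r s in let v := vval r s in
  [:: u * (u + v); - (u * (u + v)); u * (u - v); - (u * (u - v));
      v * (u + v); - (v * (u + v)); v * (u - v); - (v * (u - v))].

Definition Tset (r s : int) : seq int :=
  let u := uval r s in let v := vval r s in
  [:: u * v; - (u * v); u ^+ 2 - v ^+ 2; - (u ^+ 2 - v ^+ 2)].

(* Main.v *)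
Require Import Defs.
From HB Require Import structures.
From mathcomp Require Import all_boot all_order all_algebra.
From mathcomp Require Import zify ring.
Set Implicit Arguments. Unset Strict Implicit. Unset Printing Implicit Defensive.

(* Proof outline:
   - same square class of x and y gives x*y = k^2 in int;
   - x*y = c^2 * n with n = +-3u, +-3v, +-u(u-v), +-v(u-v);
   - 3u, 3v: mod 3 obstructions; u(u-v): coprimality + mod 8 + Fermat-style descent (descA);
     v(u-v): four squares in arithmetic progression (descB via descC). *)


Lemma cop_intro a b : (forall d, d %| a -> d %| b -> d = 1) -> coprime a b.
Proof. move=> H; rewrite /coprime; apply/eqP; apply: H; [exact: dvdn_gcdl | exact: dvdn_gcdr]. Qed.

Lemma cop_dvd a b d : coprime a b -> d %| a -> d %| b -> d = 1.
Proof.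
move=> cab da db; have : d %| gcdn a b by rewrite dvdn_gcd da db.
by rewrite (eqP cab) dvdn1 => /eqP.
Qed.

Lemma cop_modp p a b : 1 < p -> coprime a b -> a %% p = 0 -> b %% p = 0 -> False.
Proof.
move=> p1 cab ha hb.
have := @cop_dvd a b p cab; rewrite /dvdn ha hb eqxx => /(_ isT isT) H; lia.
Qed.

Lemma sq8 x : (x %% 2 = 0 /\ (x^2 %% 8 = 0 \/ x^2 %% 8 = 4)) \/ (x %% 2 = 1 /\ x^2 %% 8 = 1).
Proof.
have h2 : x %% 2 = (x %% 8) %% 2 by rewrite modn_dvdm.
rewrite -modnXm h2.
have : x %% 8 < 8 := ltn_pmod x (isT : 0 < 8).
case: (x %% 8) => [|[|[|[|[|[|[|[|i]]]]]]]] //= _;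
  first [left; split; [reflexivity| first [left;reflexivity|right;reflexivity]] | right; split; reflexivity].
Qed.

Lemma sq3 x : (x %% 3 = 0 /\ x^2 %% 3 = 0) \/ (x %% 3 <> 0 /\ x^2 %% 3 = 1).
Proof.
rewrite -modnXm.
have : x %% 3 < 3 := ltn_pmod x (isT : 0 < 3).
case: (x %% 3) => [|[|[|i]]] //= _;
  first [left; split; reflexivity | right; split; [discriminate|reflexivity]].
Qed.

Lemma gcdsq m n : gcdn (m^2) (n^2) = (gcdn m n)^2.
Proof.
have [g0|gpos] := posnP (gcdn m n).
  have := gcdn_gt0 m n; rewrite g0 /= => /esym/norP[]; rewrite -!leqNgt !leqn0 => /eqP-> /eqP->; by [].
have dm := dvdn_gcdl m n; have dn := dvdn_gcdr m n.
set g := gcdn m n in gpos dm dn *.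
have Em : m = m %/ g * g by rewrite divnK.
have En : n = n %/ g * g by rewrite divnK.
have cop : gcdn (m %/ g) (n %/ g) = 1.
  apply/eqP; rewrite -(eqn_pmul2r gpos) mul1n muln_gcdl -Em -En //.
rewrite Em En !expnMn -muln_gcdl.
have -> : gcdn ((m %/ g) ^ 2) ((n %/ g) ^ 2) = 1.
  by apply/eqP; apply: coprimeXl; apply: coprimeXr; rewrite /coprime cop.
by rewrite mul1n.
Qed.

Lemma sqfac a b k : coprime a b -> a * b = k ^ 2 -> a = (gcdn a k) ^ 2.
Proof.
move=> cab E; rewrite -gcdsq -E expnS expn1 -muln_gcdr (eqP cab) muln1 //.
Qed.

Lemma sqfac2 a b k : coprime a b -> a * b = k ^ 2 -> exists x y, a = x^2 /\ b = y^2 /\ k = x * y.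
Proof.
move=> cab E; exists (gcdn a k), (gcdn b k).
have Ha := sqfac cab E.
have Hb : b = (gcdn b k)^2 by apply: (@sqfac b a k); [rewrite coprime_sym | rewrite mulnC].
split=> //; split=> //.
apply: (@expIn 2 isT); rewrite expnMn -Ha -Hb //.
Qed.

Lemma four a b c d : a * b = c * d -> exists p q r t, [/\ a = p * q, b = r * t, c = p * r & d = q * t].
Proof.
have [a0|apos] := posnP a.
  subst a; rewrite mul0n => /esym/eqP; rewrite muln_eq0 => /orP[/eqP c0|/eqP d0].
    by exists 0, d, b, 1; split; lia.
  by exists c, 0, 1, b; split; lia.
move=> E.
have gpos : 0 < gcdn a c by rewrite gcdn_gt0 apos.
set g := gcdn a c in gpos.
have Ea : a = a %/ g * g by rewrite divnK // dvdn_gcdl.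
have Ec : c = c %/ g * g by rewrite divnK // dvdn_gcdr.
have cop : coprime (a %/ g) (c %/ g).
  rewrite /coprime; rewrite -(eqn_pmul2r gpos) mul1n muln_gcdl -Ea -Ec //.
have qpos : 0 < a %/ g by rewrite divn_gt0 // dvdn_leq // dvdn_gcdl.
have E2 : a %/ g * b = c %/ g * d.
  have : a %/ g * b * g = c %/ g * d * g by rewrite mulnAC -Ea mulnAC -Ec.
  by move/eqP; rewrite eqn_pmul2r // => /eqP.
have : a %/ g %| c %/ g * d by rewrite -E2 dvdn_mulr.
rewrite Gauss_dvdr // => /dvdnP[t Ed].
exists g, (a %/ g), (c %/ g), t; split.
- by rewrite mulnC.
- have : a %/ g * b = a %/ g * (c %/ g * t) by rewrite E2 Ed; nia.
  by move/eqP; rewrite eqn_pmul2l // => /eqP.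
- by rewrite mulnC.
- by rewrite Ed mulnC.
Qed.

Lemma halves r b : r %% 2 = b %% 2 -> b <= r -> exists x y, r = x + y /\ b + 2 * x = r.
Proof. move=> h1 h2; exists ((r - b) %/ 2), ((r + b) %/ 2); split; lia. Qed.


Lemma dvd_sq d n : d ^ 2 %| n ^ 2 -> d %| n.
Proof. by rewrite dvdn_pexp2r. Qed.

Lemma odd_dvd d r : d %| r -> odd r -> odd d.
Proof.
move=> h or; apply/negP => /negP ed.
have : 2 %| r by apply: dvdn_trans h; rewrite dvdn2.
by rewrite dvdn2 or.
Qed.

Lemma split2_even al be sig : coprime al be -> al * be = 2 * sig ^ 2 -> al %% 2 = 0 ->
  exists p q, [/\ al + be = 2 * p ^ 2 + q ^ 2, sig = p * q & coprime p q].
Proof.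
move=> cab E h.
have Ea : al = 2 * (al %/ 2) by lia.
set al' := al %/ 2 in Ea.
have E' : al' * be = sig ^ 2 by nia.
have c' : coprime al' be by apply: coprime_dvdl cab; rewrite Ea dvdn_mull.
have [p [q [h1 [h2 h3]]]] := sqfac2 c' E'.
exists p, q; split=> //.
- by rewrite Ea h1 h2.
- by move: c'; rewrite h1 h2 coprime_pexpl // coprime_pexpr.
Qed.

Lemma split2 al be sig : coprime al be -> al * be = 2 * sig ^ 2 ->
  exists p q, [/\ al + be = 2 * p ^ 2 + q ^ 2, sig = p * q & coprime p q].
Proof.
move=> cab E.
have [h|h] : al %% 2 = 0 \/ be %% 2 = 0.
  have H2 : (al * be) %% 2 = 0 by rewrite E; lia.
  move: H2; rewrite -modnMm.
  have : al %% 2 < 2 := ltn_pmod al (isT : 0 < 2).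
  have : be %% 2 < 2 := ltn_pmod be (isT : 0 < 2).
  case: (al %% 2) => [|[|?]]; case: (be %% 2) => [|[|?]] //; auto.
- exact: split2_even cab E h.
- have := @split2_even be al sig; rewrite coprime_sym mulnC => /(_ cab E h) [p [q [h1 h2 h3]]].
  exists p, q; split=> //; lia.
Qed.

Lemma sq_gt0 x : 0 < x -> 0 < x ^ 2.
Proof. by move=> h; rewrite expn_gt0 h. Qed.

Lemma descA n : forall r s a b, s < n -> coprime r s -> 0 < s ->
  r ^ 2 + s ^ 2 = a ^ 2 -> r ^ 2 = 2 * s ^ 2 + b ^ 2 -> False.
Proof.
elim: n => [|n IH] r s a b hsn cop spos E1 E2; first by [].
have nc : ~ (r %% 2 = 0 /\ s %% 2 = 0) by move=> [h1 h2]; exact: (cop_modp (isT : 1 < 2) cop h1 h2).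
have := sq8 r; have := sq8 s; have := sq8 a; have := sq8 b => Pb Pa Ps Pr.
have [sev [rod [bod aod]]] : s %% 2 = 0 /\ r %% 2 = 1 /\ b %% 2 = 1 /\ a %% 2 = 1 by lia.
clear Pb Pa Ps Pr.
have br : b <= r by clear -E2; nia.
have [al [be [Hr Hb]]] := halves (r:=r) (b:=b) ltac:(lia) br.
have Es : s = 2 * (s %/ 2) by lia.
set sig := s %/ 2 in Es.
have Eab : al * be = 2 * sig ^ 2 by clear -E2 Hr Hb Es; nia.
have ro : odd r by move: rod; rewrite modn2; case: (odd r).
have cab : coprime al be.
  apply: cop_intro => d da db.
  have dr : d %| r by rewrite Hr dvdn_add.
  have od : odd d := odd_dvd dr ro.
  have d2 : d ^ 2 %| 2 * sig ^ 2 by rewrite -Eab expnS expn1 dvdn_mul.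
  have : d ^ 2 %| sig ^ 2.
    by move: d2; rewrite Gauss_dvdr // coprime_pexpl // coprimen2.
  move/dvd_sq => ds.
  apply: (cop_dvd cop dr); rewrite Es; exact: dvdn_mull.
have [p [q [Hpq Hsig cpq]]] := split2 cab Eab.
have Er : r = 2 * p ^ 2 + q ^ 2 by rewrite Hr.
have sigpos : 0 < sig by lia.
have ppos : 0 < p by move: sigpos; rewrite Hsig muln_gt0 => /andP[].
have qpos : 0 < q by move: sigpos; rewrite Hsig muln_gt0 => /andP[].
have ra : r <= a by clear -E1; nia.
have [ga [de [Ha Hr2]]] := halves (r:=a) (b:=r) ltac:(lia) ra.
have Egd : ga * de = sig ^ 2 by clear -E1 Ha Hr2 Es; nia.
have cgd : coprime ga de.
  apply: cop_intro => d da db.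
  have e1 : de = r + ga by lia.
  have dr : d %| r by move: db; rewrite e1 dvdn_addl.
  have : d ^ 2 %| sig ^ 2 by rewrite -Egd expnS expn1 dvdn_mul.
  move/dvd_sq => ds.
  apply: (cop_dvd cop dr); rewrite Es; exact: dvdn_mull.
have [g [h [Hg [Hh Hgh]]]] := sqfac2 cgd Egd.
have [P [Q [R [T [HP HQ HR HT]]]]] := four (a:=g) (b:=h) (c:=p) (d:=q) ltac:(by rewrite -Hgh).
have Eq : (R * T) ^ 2 = (P * Q) ^ 2 + 2 * (P * R) ^ 2 + (Q * T) ^ 2.
  rewrite -HP -HQ -HR -HT; clear -Hg Hh Hr2 Ha Er; lia.
have cPT : coprime P T by move: cpq; rewrite HR HT coprimeMl !coprimeMr => /andP[/andP[_ ->] _].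
have cQR : coprime Q R by move: cpq; rewrite HR HT coprimeMl !coprimeMr => /andP[_ /andP[hh _]]; rewrite coprime_sym.
have Tpos : 0 < T by move: qpos; rewrite HT muln_gt0 => /andP[].
have Rpos : 0 < R by move: ppos; rewrite HR muln_gt0 => /andP[].
have Ppos : 0 < P by move: ppos; rewrite HR muln_gt0 => /andP[].
have dk : T ^ 2 %| Q ^ 2 + 2 * R ^ 2.
  have : T ^ 2 %| P ^ 2 * (Q ^ 2 + 2 * R ^ 2) + Q ^ 2 * T ^ 2.
    have -> : P ^ 2 * (Q ^ 2 + 2 * R ^ 2) + Q ^ 2 * T ^ 2 = R ^ 2 * T ^ 2.
      clear -Eq; rewrite !expnMn in Eq; move: Eq; generalize (P^2) (Q^2) (R^2) (T^2) => X Y Z W; lia.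
    exact: dvdn_mull.
  rewrite dvdn_addl; last exact: dvdn_mull.
  by rewrite Gauss_dvdr // coprime_pexpl // coprime_pexpr // coprime_sym.
move/dvdnP: dk => [k Hk].
have ER : R ^ 2 = k * P ^ 2 + Q ^ 2.
  have Hk2 : P ^ 2 * (Q ^ 2 + 2 * R ^ 2) = P ^ 2 * (k * T ^ 2) by rewrite Hk.
  have : T ^ 2 * R ^ 2 = T ^ 2 * (k * P ^ 2 + Q ^ 2).
    clear -Eq Hk2; rewrite !expnMn in Eq; move: Eq Hk2; generalize (P^2) (Q^2) (R^2) (T^2) => X Y Z W; lia.
  by move/eqP; rewrite eqn_pmul2l ?sq_gt0 // => /eqP.
have k3 : k %| 3.
  have h1 : k %| 3 * Q ^ 2.
    have e : 3 * Q ^ 2 + k * (2 * P ^ 2) = k * T ^ 2 by clear -Hk ER; move: Hk ER; generalize (P^2) (Q^2) (R^2) (T^2) => X Y Z W; lia.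
    have : k %| 3 * Q ^ 2 + k * (2 * P ^ 2) by rewrite e dvdn_mulr.
    by rewrite dvdn_addl // dvdn_mulr.
  have h2 : k %| 3 * R ^ 2.
    have -> : 3 * R ^ 2 = k * (P ^ 2 + T ^ 2) by clear -Hk ER; move: Hk ER; generalize (P^2) (Q^2) (R^2) (T^2) => X Y Z W; lia.
    exact: dvdn_mulr.
  have : k %| gcdn (3 * Q ^ 2) (3 * R ^ 2) by rewrite dvdn_gcd h1 h2.
  rewrite -muln_gcdr.
  have -> : gcdn (Q ^ 2) (R ^ 2) = 1 by apply/eqP; apply: coprimeXl; apply: coprimeXr.
  by rewrite muln1.
have : k = 1 \/ k = 3.
  have : k <= 3 by apply: dvdn_leq.
  by move: k3; case: k {Hk ER} => [|[|[|[|k]]]] //= _ _; [left|right].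
case=> kE; subst k.
- have := sq3 P; have := sq3 T; have := sq3 R => P3 T3 R3.
  have nc3 : ~ (P %% 3 = 0 /\ T %% 3 = 0) by move=> [h1 h2]; exact: (cop_modp (isT : 1 < 3) cPT h1 h2).
  have e : 3 * R ^ 2 = P ^ 2 + T ^ 2 by clear -Hk ER; move: Hk ER; generalize (P^2) (Q^2) (R^2) (T^2) => X Y Z W; lia.
  clear -P3 T3 R3 nc3 e; lia.
- apply: (IH T P R Q).
  + have h1 : P <= p by rewrite HR leq_pmulr.
    have h2 : p < s by clear -Es Hsig qpos ppos; nia.
    clear -hsn h1 h2; lia.
  + by rewrite coprime_sym.
  + exact: Ppos.
  + clear -Hk ER; move: Hk ER; generalize (P^2) (Q^2) (R^2) (T^2) => X Y Z W; lia.
  + clear -Hk ER; move: Hk ER; generalize (P^2) (Q^2) (R^2) (T^2) => X Y Z W; lia.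
Qed.


Lemma even_or a b : (a * b) %% 2 = 0 -> a %% 2 = 0 \/ b %% 2 = 0.
Proof.
rewrite -modnMm.
have : a %% 2 < 2 := ltn_pmod a (isT : 0 < 2).
have : b %% 2 < 2 := ltn_pmod b (isT : 0 < 2).
case: (a %% 2) => [|[|?]]; case: (b %% 2) => [|[|?]] //; auto.
Qed.

Lemma sq_le a b : a ^ 2 <= b ^ 2 -> a <= b.
Proof. by rewrite leq_exp2r. Qed.

Lemma kfix A D B C k : coprime A D -> D ^ 2 + A ^ 2 = k * B ^ 2 -> D ^ 2 + 4 * A ^ 2 = k * C ^ 2 -> k = 1.
Proof.
move=> cAD E1 E2.
have h1 : k %| 3 * A ^ 2.
  have e : k * B ^ 2 + 3 * A ^ 2 = k * C ^ 2 by move: E1 E2; generalize (A^2) (B^2) (C^2) (D^2); lia.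
  have : k %| k * B ^ 2 + 3 * A ^ 2 by rewrite e dvdn_mulr.
  by rewrite dvdn_addr // dvdn_mulr.
have h2 : k %| 3 * D ^ 2.
  have e : k * C ^ 2 + 3 * D ^ 2 = k * (4 * B ^ 2) by move: E1 E2; generalize (A^2) (B^2) (C^2) (D^2); lia.
  have : k %| k * C ^ 2 + 3 * D ^ 2 by rewrite e dvdn_mulr.
  by rewrite dvdn_addr // dvdn_mulr.
have k3 : k %| 3.
  have : k %| gcdn (3 * A ^ 2) (3 * D ^ 2) by rewrite dvdn_gcd h1 h2.
  rewrite -muln_gcdr.
  have -> : gcdn (A ^ 2) (D ^ 2) = 1 by apply/eqP; apply: coprimeXl; apply: coprimeXr.
  by rewrite muln1.
have : k = 1 \/ k = 3.
  have : k <= 3 by apply: dvdn_leq.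
  by move: k3; case: k {E1 E2 h1 h2} => [|[|[|[|k]]]] //= _ _; [left|right].
case=> // kE; subst k; exfalso.
have := sq3 A; have := sq3 D; have := sq3 B => B3 D3 A3.
have nc3 : ~ (A %% 3 = 0 /\ D %% 3 = 0) by move=> [h1' h2']; exact: (cop_modp (isT : 1 < 3) cAD h1' h2').
clear -A3 D3 B3 nc3 E1; lia.
Qed.

Lemma descC n : forall X Y U V, X + Y < n -> coprime X Y -> 0 < X -> 0 < Y ->
  X ^ 2 + Y ^ 2 = U ^ 2 -> 4 * X ^ 2 + Y ^ 2 = V ^ 2 -> False.
Proof.
elim: n => [|n IH] X Y U V hn cop Xp Yp E1 E2; first by [].
have nc : ~ (X %% 2 = 0 /\ Y %% 2 = 0) by move=> [h1 h2]; exact: (cop_modp (isT : 1 < 2) cop h1 h2).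
have := sq8 X; have := sq8 Y; have := sq8 U; have := sq8 V => PV PU PY PX.
have [Yev|Yod] : Y %% 2 = 0 \/ Y %% 2 = 1 by lia.
- have [EY EV] : Y = 2 * (Y %/ 2) /\ V = 2 * (V %/ 2) by clear -PV PU PY PX nc Yev E1 E2; lia.
  set Y' := Y %/ 2 in EY; set V' := V %/ 2 in EV.
  have E3 : Y' ^ 2 + X ^ 2 = V' ^ 2.
    move: E2; rewrite EY EV !expnMn; generalize (Y'^2) (X^2) (V'^2); lia.
  have E4 : 4 * Y' ^ 2 + X ^ 2 = U ^ 2.
    move: E1; rewrite EY !expnMn; generalize (Y'^2) (X^2) (U^2); lia.
  apply: (IH Y' X V' U) => //.
  + clear -hn EY Yp; lia.
  + rewrite coprime_sym; apply: coprime_dvdr cop; rewrite EY; exact: dvdn_mull.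
  + clear -EY Yp; lia.
have [Xev [Vod Uod]] : X %% 2 = 0 /\ V %% 2 = 1 /\ U %% 2 = 1 by clear -PV PU PY PX nc Yod E1 E2; lia.
clear PV PU PY PX.
have YV : Y <= V by apply: sq_le; clear -E2; lia.
have [G [H [HV HY]]] := halves (r:=V) (b:=Y) ltac:(clear -Vod Yod; lia) YV.
have EGH : G * H = X ^ 2 by clear -E2 HV HY; nia.
have cGH : coprime G H.
  apply: cop_intro => d dG dH.
  have eH : H = Y + G by clear -HV HY; lia.
  have dY : d %| Y by move: dH; rewrite eH dvdn_addl.
  have : d ^ 2 %| X ^ 2 by rewrite -EGH expnS expn1 dvdn_mul.
  move/dvd_sq => dX.
  exact: (cop_dvd cop dX dY).
have [g [h [Hg [Hh Hgh]]]] := sqfac2 cGH EGH.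
have EX : X = 2 * (X %/ 2) by clear -Xev; lia.
set X' := X %/ 2 in EX.
have YU : Y <= U by apply: sq_le; clear -E1; lia.
have [M [N [HU HY2]]] := halves (r:=U) (b:=Y) ltac:(clear -Uod Yod; lia) YU.
have EMN : M * N = X' ^ 2.
  have : 4 * (M * N) = 4 * X' ^ 2.
    have e : X ^ 2 = 4 * X' ^ 2 by rewrite EX expnMn.
    clear -E1 HU HY2 e; nia.
  move=> e4; clear -e4; lia.
have cMN : coprime M N.
  apply: cop_intro => d dM dN.
  have eN : N = Y + M by clear -HU HY2; lia.
  have dY : d %| Y by move: dN; rewrite eN dvdn_addl.
  have : d ^ 2 %| X' ^ 2 by rewrite -EMN expnS expn1 dvdn_mul.
  move/dvd_sq => dX.
  apply: (cop_dvd cop _ dY); rewrite EX; exact: dvdn_mull.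
have [m [nn [Hm [Hn Hmn]]]] := sqfac2 cMN EMN.
have cgh : coprime g h by move: cGH; rewrite Hg Hh coprime_pexpl // coprime_pexpr.
have cmn : coprime m nn by move: cMN; rewrite Hm Hn coprime_pexpl // coprime_pexpr.
have Eh : Y + g ^ 2 = h ^ 2 by clear -HV HY Hg Hh; lia.
have En : Y + m ^ 2 = nn ^ 2 by clear -HU HY2 Hm Hn; lia.
have Egh : g * h = 2 * (m * nn) by clear -Hgh Hmn EX; lia.
have gpos : 0 < g by move: Xp; rewrite Hgh muln_gt0 => /andP[].
have hpos : 0 < h by move: Xp; rewrite Hgh muln_gt0 => /andP[].
have [gev|hev] : g %% 2 = 0 \/ h %% 2 = 0 by apply: even_or; clear -Egh; lia.
- have Eg : g = 2 * (g %/ 2) by clear -gev; lia.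
  set g' := g %/ 2 in Eg.
  have E5 : g' * h = m * nn by clear -Egh Eg; lia.
  have [A [B [C [D [HA HB HC HD]]]]] := four E5.
  have g'pos : 0 < g' by clear -Eg gpos; lia.
  have Bpos : 0 < B by move: g'pos; rewrite HA muln_gt0 => /andP[].
  have Apos : 0 < A by move: g'pos; rewrite HA muln_gt0 => /andP[].
  have Dpos : 0 < D by move: hpos; rewrite HB muln_gt0 => /andP[].
  have Cpos : 0 < C by move: hpos; rewrite HB muln_gt0 => /andP[].
  have Eq : C ^ 2 * (D ^ 2 + A ^ 2) = B ^ 2 * (D ^ 2 + 4 * A ^ 2).
    have e : h ^ 2 + m ^ 2 = nn ^ 2 + 4 * g' ^ 2.
      have e2 : g ^ 2 = 4 * g' ^ 2 by rewrite Eg expnMn.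
      clear -Eh En e2; lia.
    move: e; rewrite HA HB HC HD !expnMn; generalize (A^2) (B^2) (C^2) (D^2) => a b c d; lia.
  have cCB : coprime C B.
    apply: (coprime_dvdl (n:=h)); first by rewrite HB dvdn_mulr.
    rewrite coprime_sym; apply: (coprime_dvdl (n:=g)); last by [].
    by rewrite Eg HA (mulnC A) mulnCA dvdn_mulr.
  have dk : B ^ 2 %| D ^ 2 + A ^ 2.
    have : B ^ 2 %| C ^ 2 * (D ^ 2 + A ^ 2) by rewrite Eq dvdn_mulr.
    by rewrite Gauss_dvdr // coprime_pexpl // coprime_pexpr // coprime_sym.
  move/dvdnP: dk => [k Hk].
  have Hk2 : D ^ 2 + 4 * A ^ 2 = k * C ^ 2.
    have : B ^ 2 * (D ^ 2 + 4 * A ^ 2) = B ^ 2 * (k * C ^ 2).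
      rewrite -Eq Hk; move: (B^2) (C^2) => b c; clear; nia.
    by move/eqP; rewrite eqn_pmul2l ?sq_gt0 // => /eqP.
  have cAD : coprime A D.
    apply: (coprime_dvdl (n:=m)); first by rewrite HC dvdn_mulr.
    rewrite coprime_sym; apply: (coprime_dvdl (n:=nn)); first by rewrite HD dvdn_mull.
    by rewrite coprime_sym.
  have k1 := kfix cAD Hk Hk2; subst k.
  apply: (IH A D B C) => //.
  + have : A <= g' by rewrite HA leq_pmulr.
    have : D <= h by rewrite HB leq_pmull.
    have : g' + h <= X by rewrite Hgh Eg; clear -g'pos hpos; nia.
    move=> h3 h2 h1; clear -hn h1 h2 h3 Yp; lia.
  + by rewrite addnC Hk mul1n.
  + by rewrite addnC Hk2 mul1n.
- have Eh2 : h = 2 * (h %/ 2) by clear -hev; lia.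
  set h' := h %/ 2 in Eh2.
  have E5 : g * h' = m * nn by clear -Egh Eh2; lia.
  have [A [B [C [D [HA HB HC HD]]]]] := four E5.
  have h'pos : 0 < h' by clear -Eh2 hpos; lia.
  have Bpos : 0 < B by move: gpos; rewrite HA muln_gt0 => /andP[].
  have Apos : 0 < A by move: gpos; rewrite HA muln_gt0 => /andP[].
  have Dpos : 0 < D by move: h'pos; rewrite HB muln_gt0 => /andP[].
  have Cpos : 0 < C by move: h'pos; rewrite HB muln_gt0 => /andP[].
  have Eq : C ^ 2 * (4 * D ^ 2 + A ^ 2) = B ^ 2 * (D ^ 2 + A ^ 2).
    have e : 4 * h' ^ 2 + m ^ 2 = nn ^ 2 + g ^ 2.
      have e2 : h ^ 2 = 4 * h' ^ 2 by rewrite Eh2 expnMn.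
      clear -Eh En e2; lia.
    move: e; rewrite HA HB HC HD !expnMn; generalize (A^2) (B^2) (C^2) (D^2) => a b c d; lia.
  have cBC : coprime B C.
    apply: (coprime_dvdl (n:=g)); first by rewrite HA dvdn_mull.
    rewrite coprime_sym; apply: (coprime_dvdl (n:=h)); last by rewrite coprime_sym.
    by rewrite Eh2 HB mulnCA dvdn_mulr.
  have dk : C ^ 2 %| D ^ 2 + A ^ 2.
    have : C ^ 2 %| B ^ 2 * (D ^ 2 + A ^ 2) by rewrite -Eq dvdn_mulr.
    by rewrite Gauss_dvdr // coprime_pexpl // coprime_pexpr // coprime_sym.
  move/dvdnP: dk => [k Hk].
  have Hk2 : A ^ 2 + 4 * D ^ 2 = k * B ^ 2.
    have : C ^ 2 * (A ^ 2 + 4 * D ^ 2) = C ^ 2 * (k * B ^ 2).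
      rewrite (addnC (A ^ 2)) Eq Hk; move: (B^2) (C^2) => b c; clear; nia.
    by move/eqP; rewrite eqn_pmul2l ?sq_gt0 // => /eqP.
  have cDA : coprime D A.
    apply: (coprime_dvdl (n:=nn)); first by rewrite HD dvdn_mull.
    rewrite coprime_sym; apply: (coprime_dvdl (n:=m)); first by rewrite HC dvdn_mulr.
    by [].
  have Hk' : A ^ 2 + D ^ 2 = k * C ^ 2 by rewrite addnC.
  have k1 := kfix cDA Hk' Hk2; subst k.
  apply: (IH D A C B) => //.
  + have : A <= g by rewrite HA leq_pmulr.
    have : D <= h' by rewrite HB leq_pmull.
    have : h' + g <= X by rewrite Hgh Eh2; clear -gpos h'pos; nia.
    move=> h3 h2 h1; clear -hn h1 h2 h3 Yp; lia.
  + by rewrite addnC Hk' mul1n.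
  + by rewrite addnC Hk2 mul1n.
Qed.


Lemma dvd_sq2 d n : d %| n -> d ^ 2 %| n ^ 2.
Proof. by move=> h; rewrite dvdn_pexp2r. Qed.

Lemma half_sq W Z : W ^ 2 = 4 * Z -> exists W', Z = W' ^ 2.
Proof.
move=> E; have := sq8 W => P.
have Wev : W %% 2 = 0 by clear -P E; lia.
have EW : W = 2 * (W %/ 2) by clear -Wev; lia.
exists (W %/ 2); move: E; rewrite {1}EW expnMn; lia.
Qed.

Lemma cop_diff x y M : coprime x y -> M + y ^ 2 = x ^ 2 -> coprime x M /\ coprime y M.
Proof.
move=> cxy E; split; apply: cop_intro => d dx dM.
- have : d %| M + y ^ 2 by rewrite E expnS expn1 dvdn_mulr.
  rewrite dvdn_addr // => dy.
  exact: (cop_dvd (coprimeXr 2 cxy) dx dy).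
- have dy2 : d %| y ^ 2 by rewrite expnS expn1 dvdn_mulr.
  have : d %| M + y ^ 2 by rewrite dvdn_add.
  rewrite E => dx2.
  exact: (cop_dvd (coprimeXl 2 cxy) dx2 dx).
Qed.

Lemma pos_of_sq x y M : 0 < y -> M + y ^ 2 = x ^ 2 -> 0 < x.
Proof.
move=> yp E; have : 0 < x ^ 2 by rewrite -E; have := sq_gt0 yp; lia.
by rewrite expn_gt0 orbF.
Qed.

Lemma Bcore ka la mu nu M N : 0 < ka -> 0 < la -> coprime mu la -> coprime nu ka ->
  M + la ^ 2 = mu ^ 2 -> N + ka ^ 2 = nu ^ 2 -> 0 < N -> M * N = 2 * ka * la * mu * nu -> False.
Proof.
move=> kap lap cml cnk EM EN Np EMN.
have [cmM clM] := cop_diff cml EM.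
have [cnN ckN] := cop_diff cnk EN.
have mup := pos_of_sq lap EM.
have nup := pos_of_sq kap EN.
have dN : mu * la %| N.
  rewrite Gauss_dvd //.
  have h1 : mu %| M * N by rewrite EMN; apply/dvdnP; exists (2 * ka * la * nu); ring.
  have h2 : la %| M * N by rewrite EMN; apply/dvdnP; exists (2 * ka * mu * nu); ring.
  by rewrite -(Gauss_dvdr _ cmM) h1 -(Gauss_dvdr _ clM) h2.
have dM : ka * nu %| M.
  rewrite Gauss_dvd; last by rewrite coprime_sym.
  have h1 : ka %| M * N by rewrite EMN; apply/dvdnP; exists (2 * la * mu * nu); ring.
  have h2 : nu %| M * N by rewrite EMN; apply/dvdnP; exists (2 * ka * la * mu); ring.
  by rewrite -(Gauss_dvdl _ ckN) h1 -(Gauss_dvdl _ cnN) h2.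
move/dvdnP: dN => [e He]; move/dvdnP: dM => [f Hf].
have Kp : 0 < ka * la * mu * nu by rewrite !muln_gt0 kap lap mup nup.
have Efe : f * e = 2.
  have : (f * e) * (ka * la * mu * nu) = 2 * (ka * la * mu * nu).
    rewrite (_ : (f * e) * (ka * la * mu * nu) = M * N); last by rewrite Hf He; ring.
    rewrite EMN; ring.
  by move/eqP; rewrite eqn_pmul2r // => /eqP.
have cXY : coprime (nu * ka) N by rewrite coprimeMl cnN ckN.
have Xp : 0 < nu * ka by rewrite muln_gt0 nup kap.
have EV : 4 * (nu * ka) ^ 2 + N ^ 2 = (nu ^ 2 + ka ^ 2) ^ 2.
  rewrite expnMn; move: EN; generalize (nu ^ 2) (ka ^ 2) => a b E; subst a; ring.
have : f = 1 \/ f = 2.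
  have : f %| 2 by apply/dvdnP; exists e; rewrite mulnC.
  have : f <= 2 by apply: dvdn_leq => //; apply/dvdnP; exists e; rewrite mulnC.
  by case: f {Hf Efe} => [|[|[|f]]] //= _ _; [left|right].
case=> fE; subst f.
- have eE : e = 2 by lia.
  subst e.
  have EU : (nu * ka) ^ 2 + N ^ 2 = (mu ^ 2 + la ^ 2) ^ 2.
    rewrite He (mulnC nu) -(mul1n (ka * nu)) -Hf !expnMn.
    move: EM; generalize (mu ^ 2) (la ^ 2) => a b E; subst a; ring.
  exact: (@descC (nu * ka + N).+1 (nu * ka) N _ _ (ltnSn _) cXY Xp Np EU EV).
- have eE : e = 1 by lia.
  subst e.
  have EU : (mu ^ 2 + la ^ 2) ^ 2 = 4 * ((nu * ka) ^ 2 + N ^ 2).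
    rewrite He mul1n !expnMn; rewrite Hf in EM.
    move: EM; generalize (mu ^ 2) => a E; subst a; ring.
  have [W' HW] := half_sq EU.
  exact: (@descC (nu * ka + N).+1 (nu * ka) N _ _ (ltnSn _) cXY Xp Np HW EV).
Qed.

Lemma ineqB a b c e K : a <= b -> c < e -> 0 < K -> c * a + b * e + 2 * K = c * b + a * e -> False.
Proof.
move=> h1 h2 h3 E.
have [x Hx] : exists x, b = a + x by exists (b - a); lia.
have [y Hy] : exists y, e = c + y + 1 by exists (e - c - 1); lia.
subst b e.
move: E h3; clear; nia.
Qed.

Lemma descB r s c d : coprime r s -> r < s -> 2 * r ^ 2 = s ^ 2 + c ^ 2 -> 2 * s ^ 2 = r ^ 2 + d ^ 2 -> False.
Proof.
move=> cop rs E1 E2.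
have nc : ~ (r %% 2 = 0 /\ s %% 2 = 0) by move=> [h1 h2]; exact: (cop_modp (isT : 1 < 2) cop h1 h2).
have := sq8 r; have := sq8 s; have := sq8 c; have := sq8 d => Pd Pc Ps Pr.
have [rod [sod [cod dod]]] : r %% 2 = 1 /\ s %% 2 = 1 /\ c %% 2 = 1 /\ d %% 2 = 1 by clear -Pd Pc Ps Pr nc E1 E2; lia.
clear Pd Pc Ps Pr nc.
have rs2 : r ^ 2 < s ^ 2 by rewrite ltn_exp2r.
have cs : c < s by rewrite -(@ltn_exp2r _ _ 2) //; clear -E1 rs2; lia.
have [Q [P [HsQP HcQ]]] := halves (r:=s) (b:=c) ltac:(clear -sod cod; lia) (ltnW cs).
have EP : P = c + Q by clear -HsQP HcQ; lia.
have Er : r ^ 2 = P ^ 2 + Q ^ 2.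
  have Es : s = c + 2 * Q by clear -HsQP HcQ; lia.
  move: E1; rewrite Es EP; clear; nia.
have Qp : 0 < Q by clear -HcQ cs; lia.
have rd : r < d by rewrite -(@ltn_exp2r _ _ 2) //; clear -E2 rs2; lia.
have [D1 [D2 [Hd Hr]]] := halves (r:=d) (b:=r) ltac:(clear -rod dod; lia) (ltnW rd).
have ED2 : D2 = r + D1 by clear -Hd Hr; lia.
have D1p : 0 < D1 by clear -Hd Hr rd; lia.
have E12 : D1 * D2 = P * Q.
  have Ed : d = r + 2 * D1 by clear -Hr; lia.
  have Es : s = P + Q by clear -HsQP; lia.
  have : 4 * (D1 * D2) = 4 * (P * Q).
    move: E2 Er; rewrite Ed Es ED2; clear; nia.
  clear; lia.
have ro : odd r by move: rod; rewrite modn2; case: (odd r).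
have cPQ : coprime P Q.
  apply: cop_intro => k kP kQ.
  have ks : k %| s by rewrite HsQP dvdn_add.
  have : k ^ 2 %| r ^ 2 by rewrite Er dvdn_add // dvd_sq2.
  move/dvd_sq => kr.
  exact: (cop_dvd cop kr ks).
have cD : coprime D1 D2.
  apply: cop_intro => k k1 k2.
  have kr : k %| r by move: k2; rewrite ED2 dvdn_addl.
  have kd : k %| d by rewrite Hd dvdn_add.
  have ko := odd_dvd kr ro.
  have : k ^ 2 %| 2 * s ^ 2 by rewrite E2 dvdn_add // dvd_sq2.
  rewrite Gauss_dvdr; last by rewrite coprime_pexpl // coprimen2.
  move/dvd_sq => ks.
  exact: (cop_dvd cop kr ks).
have [ka [la [mu [nu [H1 H2 HP HQ]]]]] := four E12.
have E : P ^ 2 + Q ^ 2 + 2 * (D1 * D2) = D1 ^ 2 + D2 ^ 2.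
  rewrite -Er ED2; clear; nia.
have cml : coprime mu la.
  apply: (coprime_dvdl (n:=P)); first by rewrite HP dvdn_mull.
  rewrite coprime_sym; apply: (coprime_dvdl (n:=Q)); first by rewrite HQ dvdn_mulr.
  by rewrite coprime_sym.
have cnk : coprime nu ka.
  apply: (coprime_dvdl (n:=D2)); first by rewrite H2 dvdn_mull.
  rewrite coprime_sym; apply: (coprime_dvdl (n:=D1)); first by rewrite H1 dvdn_mulr.
  by [].
have kap : 0 < ka by move: D1p; rewrite H1 muln_gt0 => /andP[].
have lap : 0 < la by move: D1p; rewrite H1 muln_gt0 => /andP[].
have D2p : 0 < D2 by clear -ED2 D1p; lia.
have mup : 0 < mu by move: D2p; rewrite H2 muln_gt0 => /andP[].
have nup : 0 < nu by move: D2p; rewrite H2 muln_gt0 => /andP[].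
have Kp : 0 < ka * la * mu * nu by rewrite !muln_gt0 kap lap mup nup.
have E' : ka ^ 2 * mu ^ 2 + la ^ 2 * nu ^ 2 + 2 * (ka * la * mu * nu) = ka ^ 2 * la ^ 2 + mu ^ 2 * nu ^ 2.
  move: E; rewrite HP HQ H1 H2 !expnMn (mulnC mu) (mulnC ka); rewrite !mulnA.
  move=> E; rewrite -E; ring.
clear E.
case: (ltngtP ka nu) => [kn|nk|kn].
- case: (leqP mu la) => [ml|lm].
  + apply: (@ineqB (mu ^ 2) (la ^ 2) (ka ^ 2) (nu ^ 2) (ka * la * mu * nu)) => //.
    * by rewrite leq_exp2r.
    * by rewrite ltn_exp2r.
  + apply: (@Bcore ka la mu nu (mu ^ 2 - la ^ 2) (nu ^ 2 - ka ^ 2)) => //.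
    * have : la ^ 2 < mu ^ 2 by rewrite ltn_exp2r.
      clear; lia.
    * have : ka ^ 2 < nu ^ 2 by rewrite ltn_exp2r.
      clear; lia.
    * have : ka ^ 2 < nu ^ 2 by rewrite ltn_exp2r.
      clear; lia.
    * have h1 : la ^ 2 < mu ^ 2 by rewrite ltn_exp2r.
      have h2 : ka ^ 2 < nu ^ 2 by rewrite ltn_exp2r.
      have -> : 2 * ka * la * mu * nu = 2 * (ka * la * mu * nu) by ring.
      move: E' h1 h2; generalize (ka * la * mu * nu) (ka ^ 2) (la ^ 2) (mu ^ 2) (nu ^ 2) => K a1 b1 c1 e1.
      clear; nia.
- case: (leqP la mu) => [lm|ml].
  + apply: (@ineqB (la ^ 2) (mu ^ 2) (nu ^ 2) (ka ^ 2) (ka * la * mu * nu)) => //.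
    * by rewrite leq_exp2r.
    * by rewrite ltn_exp2r.
    * move: E'; clear; nia.
  + apply: (@Bcore nu mu la ka (la ^ 2 - mu ^ 2) (ka ^ 2 - nu ^ 2)) => //.
    * by rewrite coprime_sym.
    * by rewrite coprime_sym.
    * have : mu ^ 2 < la ^ 2 by rewrite ltn_exp2r.
      clear; lia.
    * have : nu ^ 2 < ka ^ 2 by rewrite ltn_exp2r.
      clear; lia.
    * have : nu ^ 2 < ka ^ 2 by rewrite ltn_exp2r.
      clear; lia.
    * have h1 : mu ^ 2 < la ^ 2 by rewrite ltn_exp2r.
      have h2 : nu ^ 2 < ka ^ 2 by rewrite ltn_exp2r.
      have -> : 2 * nu * mu * la * ka = 2 * (ka * la * mu * nu) by ring.
      move: E' h1 h2; generalize (ka * la * mu * nu) (ka ^ 2) (la ^ 2) (mu ^ 2) (nu ^ 2) => K a1 b1 c1 e1.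
      clear; nia.
- subst nu.
  move: E' Kp.
  generalize (ka * la * mu * ka) => K.
  move=> E' Kp.
  have : 2 * K = 0 by move: E'; clear; nia.
  clear -Kp; lia.
Qed.


Lemma mod3_0 M : M ^ 2 %% 3 = 0 -> exists M', M = 3 * M'.
Proof. move=> h; have := sq3 M => P; exists (M %/ 3); clear -P h; lia. Qed.

Lemma F3u_nat R S M : coprime R S -> 3 * (R ^ 2 + S ^ 2) = M ^ 2 -> False.
Proof.
move=> cop E.
have nc : ~ (R %% 3 = 0 /\ S %% 3 = 0) by move=> [h1 h2]; exact: (cop_modp (isT : 1 < 3) cop h1 h2).
have [M' HM] : exists M', M = 3 * M' by apply: mod3_0; clear -E; lia.
have E' : R ^ 2 + S ^ 2 = 3 * M' ^ 2 by move: E; rewrite HM expnMn; clear; lia.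
have := sq3 R; have := sq3 S => PS PR; clear -PS PR E' nc; lia.
Qed.

Lemma F3v_nat R S M : coprime R S -> (3 * (2 * R ^ 2) = 3 * S ^ 2 + M ^ 2 \/ 3 * S ^ 2 = 3 * (2 * R ^ 2) + M ^ 2) -> False.
Proof.
move=> cop E.
have nc : ~ (R %% 3 = 0 /\ S %% 3 = 0) by move=> [h1 h2]; exact: (cop_modp (isT : 1 < 3) cop h1 h2).
have [M' HM] : exists M', M = 3 * M' by apply: mod3_0; clear -E; lia.
have E' : 2 * R ^ 2 = S ^ 2 + 3 * M' ^ 2 \/ S ^ 2 = 2 * R ^ 2 + 3 * M' ^ 2
  by move: E; rewrite HM expnMn; clear; lia.
have := sq3 R; have := sq3 S => PS PR; clear -PS PR E' nc; lia.
Qed.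

Lemma dvd3 d x y z : d %| x -> d %| y -> (z + x = y \/ z = x + y) -> d %| z.
Proof.
move=> dx dy [E|E].
- by move: dy; rewrite -E dvdn_addl.
- by rewrite E dvdn_add.
Qed.

Lemma gcd3 d R S : coprime R S -> d %| 3 * R ^ 2 -> d %| 3 * S ^ 2 -> d = 1 \/ d = 3.
Proof.
move=> cop h1 h2.
have : d %| gcdn (3 * R ^ 2) (3 * S ^ 2) by rewrite dvdn_gcd h1 h2.
rewrite -muln_gcdr.
have -> : gcdn (R ^ 2) (S ^ 2) = 1 by apply/eqP; apply: coprimeXl; apply: coprimeXr.
rewrite muln1 => d3.
have : d <= 3 by apply: dvdn_leq.
by move: d3; case: d {h1 h2} => [|[|[|[|d]]]] //= _ _; [left|right].
Qed.

Lemma Fuw_nat R S W M : coprime R S -> 0 < R -> ~ (R = 1 /\ S = 0) -> 0 < W ->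
  (W + R ^ 2 = 2 * S ^ 2 \/ 2 * S ^ 2 + W = R ^ 2) -> (R ^ 2 + S ^ 2) * W = M ^ 2 -> False.
Proof.
move=> cop Rp n10 Wp EW E.
have nc : ~ (R %% 3 = 0 /\ S %% 3 = 0) by move=> [h1 h2]; exact: (cop_modp (isT : 1 < 3) cop h1 h2).
have := sq3 R; have := sq3 S => PS3 PR3.
have cuw : coprime (R ^ 2 + S ^ 2) W.
  apply: cop_intro => d du dW.
  have h1 : d %| 3 * R ^ 2.
    apply: (dvd3 (x := W) (y := 2 * (R ^ 2 + S ^ 2))) => //; first by rewrite dvdn_mull.
    clear -EW; lia.
  have h2 : d %| 3 * S ^ 2.
    apply: (dvd3 (x := W) (y := R ^ 2 + S ^ 2)) => //.
    clear -EW; lia.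
  have [//|d3] := gcd3 cop h1 h2.
  exfalso; subst d; move: du; rewrite /dvdn => /eqP h.
  clear -h PS3 PR3 nc; lia.
have [a [b [Ha [Hb Hab]]]] := sqfac2 cuw E.
case: EW => EW.
- have nc2 : ~ (R %% 2 = 0 /\ S %% 2 = 0) by move=> [h1 h2]; exact: (cop_modp (isT : 1 < 2) cop h1 h2).
  have := sq8 R; have := sq8 S; have := sq8 a; have := sq8 b => Pb Pa PS PR.
  clear -Pb Pa PS PR nc2 EW Ha Hb; lia.
- have [S0|Sp] := posnP S.
  + subst S; have : gcdn R 0 = 1 by apply/eqP.
    by rewrite gcdn0 => R1; apply: n10.
  + by apply: (@descA S.+1 R S a b) => //; rewrite -EW Hb.
Qed.

Lemma Fvw_nat R S V W M : coprime R S -> 0 < R -> ~ (R = 1 /\ S = 1) -> 0 < V -> 0 < W ->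
  (V + S ^ 2 = 2 * R ^ 2 \/ 2 * R ^ 2 + V = S ^ 2) ->
  (W + R ^ 2 = 2 * S ^ 2 \/ 2 * S ^ 2 + W = R ^ 2) -> V * W = M ^ 2 -> False.
Proof.
move=> cop Rp n11 Vp Wp EV EW E.
have nc : ~ (R %% 3 = 0 /\ S %% 3 = 0) by move=> [h1 h2]; exact: (cop_modp (isT : 1 < 3) cop h1 h2).
have := sq3 R; have := sq3 S => PS3 PR3.
have cvw : coprime V W.
  apply: cop_intro => d dV dW.
  have d2V : d %| 2 * V by rewrite dvdn_mull.
  have d2W : d %| 2 * W by rewrite dvdn_mull.
  have h1 : d %| 3 * R ^ 2.
    case: EV => EV; case: EW => EW.
    - apply: (dvd3 (x := 2 * V) (y := W)) => //; clear -EV EW; lia.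
    - apply: (dvd3 (x := W) (y := 2 * V)) => //; clear -EV EW; lia.
    - apply: (dvd3 (x := 2 * V) (y := W)) => //; clear -EV EW; lia.
    - exfalso; clear -EV EW Rp; nia.
  have h2 : d %| 3 * S ^ 2.
    case: EV => EV; case: EW => EW.
    - apply: (dvd3 (x := V) (y := 2 * W)) => //; clear -EV EW; lia.
    - apply: (dvd3 (x := 2 * W) (y := V)) => //; clear -EV EW; lia.
    - apply: (dvd3 (x := V) (y := 2 * W)) => //; clear -EV EW; lia.
    - exfalso; clear -EV EW Rp; nia.
  have [//|d3] := gcd3 cop h1 h2.
  exfalso; subst d; move: dV; rewrite /dvdn => /eqP h.
  clear -h EV PS3 PR3 nc; lia.
have [c [d [Hc [Hd Hcd]]]] := sqfac2 cvw E.
have nc2 : ~ (R %% 2 = 0 /\ S %% 2 = 0) by move=> [h1 h2]; exact: (cop_modp (isT : 1 < 2) cop h1 h2).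
case: EV => EV; case: EW => EW.
- have E1 : 2 * R ^ 2 = S ^ 2 + c ^ 2 by rewrite -EV Hc addnC.
  have E2 : 2 * S ^ 2 = R ^ 2 + d ^ 2 by rewrite -EW Hd addnC.
  case: (ltngtP R S) => [RS|SR|RS].
  + exact: (descB cop RS E1 E2).
  + by apply: (descB (r:=S) (s:=R) (c:=d) (d:=c)) => //; by [rewrite coprime_sym | rewrite addnC].
  + subst S; have : gcdn R R = 1 by apply/eqP.
    by rewrite gcdnn => R1; apply: n11.
- have := sq8 R; have := sq8 S; have := sq8 c; have := sq8 d => Pd Pc PS PR.
  clear -Pd Pc PS PR nc2 EV EW Hc Hd; lia.
- have := sq8 R; have := sq8 S; have := sq8 c; have := sq8 d => Pd Pc PS PR.
  clear -Pd Pc PS PR nc2 EV EW Hc Hd; lia.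
- clear -EV EW Rp; nia.
Qed.

Import Order.TTheory GRing.Theory Num.Theory.
Local Open Scope ring_scope.


Lemma sqabs (z : int) : z ^+ 2 = ((absz z) ^ 2)%N%:Z.
Proof. by rewrite -abszX abszE ger0_norm // sqr_ge0. Qed.

Lemma rat_sq (n : int) (q : rat) : n%:~R = q ^+ 2 -> exists k : int, n = k ^+ 2.
Proof.
move=> E.
have dpos : 0 < denq q := denq_gt0 q.
have Ez : n * (denq q) ^+ 2 = (numq q) ^+ 2.
  apply: (@intr_inj rat); rewrite !expr2 !intrM -expr2 E numqE; ring.
have En : (absz n * (absz (denq q)) ^ 2)%N = (absz (numq q) ^ 2)%N.
  by rewrite -abszX -abszM Ez abszX.
have dd : (absz (denq q) %| absz (numq q))%N.
  apply: dvd_sq; rewrite -En; exact: dvdn_mull.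
have d1 : absz (denq q) = 1%N := cop_dvd (coprime_num_den q) dd (dvdnn _).
have d1' : denq q = 1 by rewrite -[denq q]gez0_abs ?d1 // ltW.
by exists (numq q); rewrite -Ez d1' expr1n mulr1.
Qed.

Lemma sq_cancel (c n k : int) : c != 0 -> c ^+ 2 * n = k ^+ 2 -> exists m, n = m ^+ 2.
Proof.
move=> c0 E; apply: (@rat_sq n (k%:~R / c%:~R)).
have c0' : (c%:~R : rat) != 0 by rewrite intr_eq0.
have E' : (c%:~R ^+ 2 * n%:~R : rat) = k%:~R ^+ 2.
  by have := congr1 (fun z : int => (z%:~R : rat)) E; rewrite /= !expr2 !intrM.
rewrite expr_div_n -E'; field.
by rewrite ?expf_neq0.
Qed.

Lemma step (xy k c n : int) : xy = c ^+ 2 * n -> xy != 0 -> xy = k ^+ 2 -> n != 0 /\ exists m, n = m ^+ 2.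
Proof.
move=> E xy0 Ek.
have c0 : c != 0 by apply: contraNneq xy0 => c0; rewrite E c0 expr0n mul0r.
have n0 : n != 0 by apply: contraNneq xy0 => n0; rewrite E n0 mulr0.
split=> //; apply: (@sq_cancel c n k c0); by rewrite -E.
Qed.


Definition FF : seq (int * int) := [:: (1,0); (-1,0); (1,1); (1,-1); (-1,1); (-1,-1)].

Lemma nF10 r s : (r, s) \notin FF -> ~ (absz r = 1%N /\ absz s = 0%N).
Proof.
move=> nF [h1 h2].
have hs : s = 0 by lia.
have [hr|hr] : r = 1 \/ r = -1 by lia.
all: by move: nF; rewrite hs hr.
Qed.

Lemma nF11 r s : (r, s) \notin FF -> ~ (absz r = 1%N /\ absz s = 1%N).
Proof.
move=> nF [h1 h2].
have [hr|hr] : r = 1 \/ r = -1 by lia.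
all: have [hs|hs] : s = 1 \/ s = -1 by lia.
all: by move: nF; rewrite hs hr.
Qed.

Lemma hu r s : uval r s = ((absz r) ^ 2 + (absz s) ^ 2)%N%:Z.
Proof. by rewrite /uval !sqabs PoszD. Qed.

Lemma hv r s : vval r s = (2 * (absz r) ^ 2)%N%:Z - ((absz s) ^ 2)%N%:Z.
Proof. rewrite /vval !sqabs PoszM. by []. Qed.

Lemma hw r s : uval r s - vval r s = (2 * (absz s) ^ 2)%N%:Z - ((absz r) ^ 2)%N%:Z.
Proof. rewrite hu hv !PoszD !PoszM; ring. Qed.

Lemma FI_3u r s n m : coprimez r s -> r != 0 -> (n = 3 * uval r s \/ n = - (3 * uval r s)) ->
  n != 0 -> n = m ^+ 2 -> False.
Proof.
move=> cop r0 Hn n0 Hm.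
have cRS : coprime (absz r) (absz s) by rewrite -coprimezE.
move: Hm n0; rewrite sqabs; case: Hn => ->; rewrite hu => Hm n0.
- apply: (@F3u_nat (absz r) (absz s) (absz m) cRS); lia.
- lia.
Qed.

Lemma FI_3v r s n m : coprimez r s -> r != 0 -> (n = 3 * vval r s \/ n = - (3 * vval r s)) ->
  n != 0 -> n = m ^+ 2 -> False.
Proof.
move=> cop r0 Hn n0 Hm.
have cRS : coprime (absz r) (absz s) by rewrite -coprimezE.
move: Hm n0; rewrite sqabs; case: Hn => ->; rewrite hv => Hm n0.
- apply: (@F3v_nat (absz r) (absz s) (absz m) cRS); left; lia.
- apply: (@F3v_nat (absz r) (absz s) (absz m) cRS); right; lia.
Qed.

Lemma FI_uw r s n m : coprimez r s -> r != 0 -> (r, s) \notin FF ->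
  (n = uval r s * (uval r s - vval r s) \/ n = - (uval r s * (uval r s - vval r s))) ->
  n != 0 -> n = m ^+ 2 -> False.
Proof.
move=> cop r0 nF Hn n0 Hm.
have cRS : coprime (absz r) (absz s) by rewrite -coprimezE.
have Rp : (0 < absz r)%N by rewrite absz_gt0.
have Wp : (0 < absz (uval r s - vval r s))%N.
  rewrite absz_gt0; apply: contraNneq n0 => h.
  by case: Hn => ->; rewrite h mulr0 ?oppr0.
have EN : absz n = (((absz r) ^ 2 + (absz s) ^ 2) * absz (uval r s - vval r s))%N.
  by case: Hn => ->; rewrite ?abszN abszM hu.
have EM : absz n = (absz m ^ 2)%N by rewrite Hm abszX.
apply: (@Fuw_nat (absz r) (absz s) (absz (uval r s - vval r s)) (absz m) cRS Rp (nF10 nF) Wp).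
- rewrite hw; clear -r s; lia.
- by rewrite -EN EM.
Qed.

Lemma FI_vw r s n m : coprimez r s -> r != 0 -> (r, s) \notin FF ->
  (n = vval r s * (uval r s - vval r s) \/ n = - (vval r s * (uval r s - vval r s))) ->
  n != 0 -> n = m ^+ 2 -> False.
Proof.
move=> cop r0 nF Hn n0 Hm.
have cRS : coprime (absz r) (absz s) by rewrite -coprimezE.
have Rp : (0 < absz r)%N by rewrite absz_gt0.
have Wp : (0 < absz (uval r s - vval r s))%N.
  rewrite absz_gt0; apply: contraNneq n0 => h.
  by case: Hn => ->; rewrite h mulr0 ?oppr0.
have Vp : (0 < absz (vval r s))%N.
  rewrite absz_gt0; apply: contraNneq n0 => h.
  by case: Hn => ->; rewrite h mul0r ?oppr0.
have EN : absz n = (absz (vval r s) * absz (uval r s - vval r s))%N.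
  by case: Hn => ->; rewrite ?abszN abszM.
have EM : absz n = (absz m ^ 2)%N by rewrite Hm abszX.
apply: (@Fvw_nat (absz r) (absz s) (absz (vval r s)) (absz (uval r s - vval r s)) (absz m) cRS Rp (nF11 nF) Vp Wp).
- rewrite hv; clear -r s; lia.
- rewrite hw; clear -r s; lia.
- by rewrite -EN EM.
Qed.


Theorem lemma6p4 :
  exists F : seq (int * int),
    forall r s : int, coprimez r s -> r != 0 -> (r, s) \notin F ->
      forall x y : int, x \in Sset r s -> y \in Tset r s ->
        ~ same_sqclass (x%:~R) (y%:~R).
Proof.
exists FF => r s cop r0 nF x y Hx Hy [xn [yn [q Hq]]].
have [k Hk] : exists k : int, x * y = k ^+ 2.
  apply: (@rat_sq _ (q * y%:~R)); rewrite intrM exprMn -Hq; field.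
  by [].
have xy0 : x * y != 0 by rewrite mulf_neq0 // -(intr_eq0 rat).
move: Hx Hy; rewrite /Sset /Tset /= !inE.
case/orP => [/eqP Ex|Hx].
 subst x.
  case/orP => [/eqP Ey|Hy]. subst y.
  have [n0 [m Hm]] : (3 * vval r s) != 0 /\ exists m, (3 * vval r s) = m ^+ 2.
    by apply: (@step _ k (uval r s * r) (3 * vval r s) _ xy0 Hk); rewrite /uval /vval; ring.
  exact: (@FI_3v r s _ m cop r0 (or_introl erefl) n0 Hm).
  move: Hy.
  case/orP => [/eqP Ey|Hy]. subst y.
  have [n0 [m Hm]] : (- (3 * vval r s)) != 0 /\ exists m, (- (3 * vval r s)) = m ^+ 2.
    by apply: (@step _ k (uval r s * r) (- (3 * vval r s)) _ xy0 Hk); rewrite /uval /vval; ring.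
  exact: (@FI_3v r s _ m cop r0 (or_intror erefl) n0 Hm).
  move: Hy.
  case/orP => [/eqP Ey|Hy]. subst y.
  have [n0 [m Hm]] : (uval r s * (uval r s - vval r s)) != 0 /\ exists m, (uval r s * (uval r s - vval r s)) = m ^+ 2.
    by apply: (@step _ k (3 * r ^+ 2) (uval r s * (uval r s - vval r s)) _ xy0 Hk); rewrite /uval /vval; ring.
  exact: (@FI_uw r s _ m cop r0 nF (or_introl erefl) n0 Hm).
  move: Hy.
  move=> /eqP Ey. subst y.
  have [n0 [m Hm]] : (- (uval r s * (uval r s - vval r s))) != 0 /\ exists m, (- (uval r s * (uval r s - vval r s))) = m ^+ 2.
    by apply: (@step _ k (3 * r ^+ 2) (- (uval r s * (uval r s - vval r s))) _ xy0 Hk); rewrite /uval /vval; ring.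
  exact: (@FI_uw r s _ m cop r0 nF (or_intror erefl) n0 Hm).
move: Hx.
case/orP => [/eqP Ex|Hx].
 subst x.
  case/orP => [/eqP Ey|Hy]. subst y.
  have [n0 [m Hm]] : (- (3 * vval r s)) != 0 /\ exists m, (- (3 * vval r s)) = m ^+ 2.
    by apply: (@step _ k (uval r s * r) (- (3 * vval r s)) _ xy0 Hk); rewrite /uval /vval; ring.
  exact: (@FI_3v r s _ m cop r0 (or_intror erefl) n0 Hm).
  move: Hy.
  case/orP => [/eqP Ey|Hy]. subst y.
  have [n0 [m Hm]] : (3 * vval r s) != 0 /\ exists m, (3 * vval r s) = m ^+ 2.
    by apply: (@step _ k (uval r s * r) (3 * vval r s) _ xy0 Hk); rewrite /uval /vval; ring.
  exact: (@FI_3v r s _ m cop r0 (or_introl erefl) n0 Hm).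
  move: Hy.
  case/orP => [/eqP Ey|Hy]. subst y.
  have [n0 [m Hm]] : (- (uval r s * (uval r s - vval r s))) != 0 /\ exists m, (- (uval r s * (uval r s - vval r s))) = m ^+ 2.
    by apply: (@step _ k (3 * r ^+ 2) (- (uval r s * (uval r s - vval r s))) _ xy0 Hk); rewrite /uval /vval; ring.
  exact: (@FI_uw r s _ m cop r0 nF (or_intror erefl) n0 Hm).
  move: Hy.
  move=> /eqP Ey. subst y.
  have [n0 [m Hm]] : (uval r s * (uval r s - vval r s)) != 0 /\ exists m, (uval r s * (uval r s - vval r s)) = m ^+ 2.
    by apply: (@step _ k (3 * r ^+ 2) (uval r s * (uval r s - vval r s)) _ xy0 Hk); rewrite /uval /vval; ring.
  exact: (@FI_uw r s _ m cop r0 nF (or_introl erefl) n0 Hm).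
move: Hx.
case/orP => [/eqP Ex|Hx].
 subst x.
  case/orP => [/eqP Ey|Hy]. subst y.
  have [n0 [m Hm]] : (vval r s * (uval r s - vval r s)) != 0 /\ exists m, (vval r s * (uval r s - vval r s)) = m ^+ 2.
    by apply: (@step _ k (uval r s) (vval r s * (uval r s - vval r s)) _ xy0 Hk); rewrite /uval /vval; ring.
  exact: (@FI_vw r s _ m cop r0 nF (or_introl erefl) n0 Hm).
  move: Hy.
  case/orP => [/eqP Ey|Hy]. subst y.
  have [n0 [m Hm]] : (- (vval r s * (uval r s - vval r s))) != 0 /\ exists m, (- (vval r s * (uval r s - vval r s))) = m ^+ 2.
    by apply: (@step _ k (uval r s) (- (vval r s * (uval r s - vval r s))) _ xy0 Hk); rewrite /uval /vval; ring.
  exact: (@FI_vw r s _ m cop r0 nF (or_intror erefl) n0 Hm).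
  move: Hy.
  case/orP => [/eqP Ey|Hy]. subst y.
  have [n0 [m Hm]] : (3 * uval r s) != 0 /\ exists m, (3 * uval r s) = m ^+ 2.
    by apply: (@step _ k ((uval r s - vval r s) * r) (3 * uval r s) _ xy0 Hk); rewrite /uval /vval; ring.
  exact: (@FI_3u r s _ m cop r0 (or_introl erefl) n0 Hm).
  move: Hy.
  move=> /eqP Ey. subst y.
  have [n0 [m Hm]] : (- (3 * uval r s)) != 0 /\ exists m, (- (3 * uval r s)) = m ^+ 2.
    by apply: (@step _ k ((uval r s - vval r s) * r) (- (3 * uval r s)) _ xy0 Hk); rewrite /uval /vval; ring.
  exact: (@FI_3u r s _ m cop r0 (or_intror erefl) n0 Hm).
move: Hx.
case/orP => [/eqP Ex|Hx].
 subst x.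
  case/orP => [/eqP Ey|Hy]. subst y.
  have [n0 [m Hm]] : (- (vval r s * (uval r s - vval r s))) != 0 /\ exists m, (- (vval r s * (uval r s - vval r s))) = m ^+ 2.
    by apply: (@step _ k (uval r s) (- (vval r s * (uval r s - vval r s))) _ xy0 Hk); rewrite /uval /vval; ring.
  exact: (@FI_vw r s _ m cop r0 nF (or_intror erefl) n0 Hm).
  move: Hy.
  case/orP => [/eqP Ey|Hy]. subst y.
  have [n0 [m Hm]] : (vval r s * (uval r s - vval r s)) != 0 /\ exists m, (vval r s * (uval r s - vval r s)) = m ^+ 2.
    by apply: (@step _ k (uval r s) (vval r s * (uval r s - vval r s)) _ xy0 Hk); rewrite /uval /vval; ring.
  exact: (@FI_vw r s _ m cop r0 nF (or_introl erefl) n0 Hm).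
  move: Hy.
  case/orP => [/eqP Ey|Hy]. subst y.
  have [n0 [m Hm]] : (- (3 * uval r s)) != 0 /\ exists m, (- (3 * uval r s)) = m ^+ 2.
    by apply: (@step _ k ((uval r s - vval r s) * r) (- (3 * uval r s)) _ xy0 Hk); rewrite /uval /vval; ring.
  exact: (@FI_3u r s _ m cop r0 (or_intror erefl) n0 Hm).
  move: Hy.
  move=> /eqP Ey. subst y.
  have [n0 [m Hm]] : (3 * uval r s) != 0 /\ exists m, (3 * uval r s) = m ^+ 2.
    by apply: (@step _ k ((uval r s - vval r s) * r) (3 * uval r s) _ xy0 Hk); rewrite /uval /vval; ring.
  exact: (@FI_3u r s _ m cop r0 (or_introl erefl) n0 Hm).
move: Hx.
case/orP => [/eqP Ex|Hx].
 subst x.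
  case/orP => [/eqP Ey|Hy]. subst y.
  have [n0 [m Hm]] : (3 * uval r s) != 0 /\ exists m, (3 * uval r s) = m ^+ 2.
    by apply: (@step _ k (vval r s * r) (3 * uval r s) _ xy0 Hk); rewrite /uval /vval; ring.
  exact: (@FI_3u r s _ m cop r0 (or_introl erefl) n0 Hm).
  move: Hy.
  case/orP => [/eqP Ey|Hy]. subst y.
  have [n0 [m Hm]] : (- (3 * uval r s)) != 0 /\ exists m, (- (3 * uval r s)) = m ^+ 2.
    by apply: (@step _ k (vval r s * r) (- (3 * uval r s)) _ xy0 Hk); rewrite /uval /vval; ring.
  exact: (@FI_3u r s _ m cop r0 (or_intror erefl) n0 Hm).
  move: Hy.
  case/orP => [/eqP Ey|Hy]. subst y.
  have [n0 [m Hm]] : (vval r s * (uval r s - vval r s)) != 0 /\ exists m, (vval r s * (uval r s - vval r s)) = m ^+ 2.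
    by apply: (@step _ k (3 * r ^+ 2) (vval r s * (uval r s - vval r s)) _ xy0 Hk); rewrite /uval /vval; ring.
  exact: (@FI_vw r s _ m cop r0 nF (or_introl erefl) n0 Hm).
  move: Hy.
  move=> /eqP Ey. subst y.
  have [n0 [m Hm]] : (- (vval r s * (uval r s - vval r s))) != 0 /\ exists m, (- (vval r s * (uval r s - vval r s))) = m ^+ 2.
    by apply: (@step _ k (3 * r ^+ 2) (- (vval r s * (uval r s - vval r s))) _ xy0 Hk); rewrite /uval /vval; ring.
  exact: (@FI_vw r s _ m cop r0 nF (or_intror erefl) n0 Hm).
move: Hx.
case/orP => [/eqP Ex|Hx].
 subst x.
  case/orP => [/eqP Ey|Hy]. subst y.
  have [n0 [m Hm]] : (- (3 * uval r s)) != 0 /\ exists m, (- (3 * uval r s)) = m ^+ 2.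
    by apply: (@step _ k (vval r s * r) (- (3 * uval r s)) _ xy0 Hk); rewrite /uval /vval; ring.
  exact: (@FI_3u r s _ m cop r0 (or_intror erefl) n0 Hm).
  move: Hy.
  case/orP => [/eqP Ey|Hy]. subst y.
  have [n0 [m Hm]] : (3 * uval r s) != 0 /\ exists m, (3 * uval r s) = m ^+ 2.
    by apply: (@step _ k (vval r s * r) (3 * uval r s) _ xy0 Hk); rewrite /uval /vval; ring.
  exact: (@FI_3u r s _ m cop r0 (or_introl erefl) n0 Hm).
  move: Hy.
  case/orP => [/eqP Ey|Hy]. subst y.
  have [n0 [m Hm]] : (- (vval r s * (uval r s - vval r s))) != 0 /\ exists m, (- (vval r s * (uval r s - vval r s))) = m ^+ 2.
    by apply: (@step _ k (3 * r ^+ 2) (- (vval r s * (uval r s - vval r s))) _ xy0 Hk); rewrite /uval /vval; ring.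
  exact: (@FI_vw r s _ m cop r0 nF (or_intror erefl) n0 Hm).
  move: Hy.
  move=> /eqP Ey. subst y.
  have [n0 [m Hm]] : (vval r s * (uval r s - vval r s)) != 0 /\ exists m, (vval r s * (uval r s - vval r s)) = m ^+ 2.
    by apply: (@step _ k (3 * r ^+ 2) (vval r s * (uval r s - vval r s)) _ xy0 Hk); rewrite /uval /vval; ring.
  exact: (@FI_vw r s _ m cop r0 nF (or_introl erefl) n0 Hm).
move: Hx.
case/orP => [/eqP Ex|Hx].
 subst x.
  case/orP => [/eqP Ey|Hy]. subst y.
  have [n0 [m Hm]] : (uval r s * (uval r s - vval r s)) != 0 /\ exists m, (uval r s * (uval r s - vval r s)) = m ^+ 2.
    by apply: (@step _ k (vval r s) (uval r s * (uval r s - vval r s)) _ xy0 Hk); rewrite /uval /vval; ring.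
  exact: (@FI_uw r s _ m cop r0 nF (or_introl erefl) n0 Hm).
  move: Hy.
  case/orP => [/eqP Ey|Hy]. subst y.
  have [n0 [m Hm]] : (- (uval r s * (uval r s - vval r s))) != 0 /\ exists m, (- (uval r s * (uval r s - vval r s))) = m ^+ 2.
    by apply: (@step _ k (vval r s) (- (uval r s * (uval r s - vval r s))) _ xy0 Hk); rewrite /uval /vval; ring.
  exact: (@FI_uw r s _ m cop r0 nF (or_intror erefl) n0 Hm).
  move: Hy.
  case/orP => [/eqP Ey|Hy]. subst y.
  have [n0 [m Hm]] : (3 * vval r s) != 0 /\ exists m, (3 * vval r s) = m ^+ 2.
    by apply: (@step _ k ((uval r s - vval r s) * r) (3 * vval r s) _ xy0 Hk); rewrite /uval /vval; ring.
  exact: (@FI_3v r s _ m cop r0 (or_introl erefl) n0 Hm).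
  move: Hy.
  move=> /eqP Ey. subst y.
  have [n0 [m Hm]] : (- (3 * vval r s)) != 0 /\ exists m, (- (3 * vval r s)) = m ^+ 2.
    by apply: (@step _ k ((uval r s - vval r s) * r) (- (3 * vval r s)) _ xy0 Hk); rewrite /uval /vval; ring.
  exact: (@FI_3v r s _ m cop r0 (or_intror erefl) n0 Hm).
move: Hx.
move=> /eqP Ex.
 subst x.
  case/orP => [/eqP Ey|Hy]. subst y.
  have [n0 [m Hm]] : (- (uval r s * (uval r s - vval r s))) != 0 /\ exists m, (- (uval r s * (uval r s - vval r s))) = m ^+ 2.
    by apply: (@step _ k (vval r s) (- (uval r s * (uval r s - vval r s))) _ xy0 Hk); rewrite /uval /vval; ring.
  exact: (@FI_uw r s _ m cop r0 nF (or_intror erefl) n0 Hm).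
  move: Hy.
  case/orP => [/eqP Ey|Hy]. subst y.
  have [n0 [m Hm]] : (uval r s * (uval r s - vval r s)) != 0 /\ exists m, (uval r s * (uval r s - vval r s)) = m ^+ 2.
    by apply: (@step _ k (vval r s) (uval r s * (uval r s - vval r s)) _ xy0 Hk); rewrite /uval /vval; ring.
  exact: (@FI_uw r s _ m cop r0 nF (or_introl erefl) n0 Hm).
  move: Hy.
  case/orP => [/eqP Ey|Hy]. subst y.
  have [n0 [m Hm]] : (- (3 * vval r s)) != 0 /\ exists m, (- (3 * vval r s)) = m ^+ 2.
    by apply: (@step _ k ((uval r s - vval r s) * r) (- (3 * vval r s)) _ xy0 Hk); rewrite /uval /vval; ring.
  exact: (@FI_3v r s _ m cop r0 (or_intror erefl) n0 Hm).
  move: Hy.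
  move=> /eqP Ey. subst y.
  have [n0 [m Hm]] : (3 * vval r s) != 0 /\ exists m, (3 * vval r s) = m ^+ 2.
    by apply: (@step _ k ((uval r s - vval r s) * r) (3 * vval r s) _ xy0 Hk); rewrite /uval /vval; ring.
  exact: (@FI_3v r s _ m cop r0 (or_introl erefl) n0 Hm).
Qed.
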